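(* Let $V$ be a vertex operator algebra. Any $C_1$-cofinite $\mathbb N$-gradable weak $V$-module is finitely generated.
   Context: A weak $V$-module $W$ is $\mathbb N$-gradable if there is a grading $W=\bigoplus_{n\in\mathbb N}W(n)$ with $v_mW(n)\subseteq W(\mathrm{wt}\,v+n-m-1)$ for homogeneous $v\in V$ and all $m\in\mathbb Z$ (where $Y_W(v,x)=\sum_m v_mx^{-m-1}$). $C_1(W)=\mathrm{span}\{v_{-1}w: v\in\bigoplus_{n\ge1}V_{(n)},\ w\in W\}$, and $W$ is $C_1$-cofinite if $\dim W/C_1(W)<\infty$. *)

(* Defs.v *)
From HB Require Import structures.
From mathcomp Require Import all_boot all_order all_algebra.
From mathcomp Require Import complex reals Rstruct.
Set Implicit Arguments. Unset Strict Implicit. Unset Printing Implicit Defensive.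
Import Order.TTheory GRing.Theory Num.Theory.
Local Open Scope ring_scope.

Definition CC : fieldType := (Rdefinitions.R)[i].

Section VOADefs.
Variable V : lmodType CC.

Definition in_span (P : V -> Prop) (v : V) : Prop :=
  exists (k : nat) (c : 'I_k -> CC) (x : 'I_k -> V),
    (forall j, P (x j)) /\ v = \sum_(j < k) c j *: x j.

Definition is_subspace (P : V -> Prop) : Prop :=
  P 0 /\ forall (a : CC) (x y : V), P x -> P y -> P (a *: x + y).

Definition fin_dim (P : V -> Prop) : Prop :=
  exists s : seq V, (forall x, x \in s -> P x) /\ forall v, P v -> in_span (fun x => x \in s) v.

(* G : int -> V -> Prop is a Z-grading: V = (+)_{n in Z} G n (internal direct sum) *)
Definition is_Zgrading (G : int -> V -> Prop) : Prop :=
  (forall n, is_subspace (G n)) /\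
  (forall v : V, exists (s : seq int) (f : int -> V),
      (forall n, G n (f n)) /\ v = \sum_(n <- s) f n) /\
  (forall (s : seq int) (f : int -> V), uniq s -> (forall n, G n (f n)) ->
      \sum_(n <- s) f n = 0 -> forall n, n \in s -> f n = 0).

(* finite sums: "eventually the partial sums of the two (formally infinite,
   but finitely supported) series over i >= 0 agree" *)
Definition series_eq (a b : nat -> V) : Prop :=
  exists N : nat, forall M : nat, (N <= M)%N ->
    \sum_(i < M) a i = \sum_(i < M) b i.
End VOADefs.

Definition binz (p : int) (i : nat) : CC :=
  (\prod_(j < i) (p%:~R - j%:R)) / (i`!)%:R.

(* vertex operator in components: Y u m v = u_m v, i.e. Y(u,x) = sum_m u_m x^{-m-1} *)
Definition vop (V W : lmodType CC) := V -> int -> W -> W.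

(* Borcherds (component form of the Jacobi) identity for Y : V -> End W,
   where YV is the vertex operator of V:
   sum_{i>=0} binom(m,i) (u_{l+i} v)_{m+n-i} w
     = sum_{i>=0} (-1)^i binom(l,i) (u_{m+l-i} v_{n+i} w - (-1)^l v_{n+l-i} u_{m+i} w) *)
Definition jacobi_identity (V W : lmodType CC) (YV : vop V V) (Y : vop V W) : Prop :=
  forall (u v : V) (w : W) (m n l : int),
    series_eq
      (fun i : nat => binz m i *: Y (YV u (l + i%:Z) v) (m + n - i%:Z) w)
      (fun i : nat => ((-1) ^+ i * binz l i) *:
          (Y u (m + l - i%:Z) (Y v (n + i%:Z) w)
           - ((-1) ^ l) *: Y v (n + l - i%:Z) (Y u (m + i%:Z) w))).

Definition vop_bilinear (V W : lmodType CC) (Y : vop V W) : Prop :=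
  (forall (a : CC) (u u' : V) m (w : W), Y (a *: u + u') m w = a *: Y u m w + Y u' m w) /\
  (forall (a : CC) (u : V) m (w w' : W), Y u m (a *: w + w') = a *: Y u m w + Y u m w').

Definition vop_truncation (V W : lmodType CC) (Y : vop V W) : Prop :=
  forall (u : V) (w : W), exists N : int, forall m : int, N <= m -> Y u m w = 0.

(* Vertex operator algebra (V, Y, 1, omega) with grading Vg and central charge c
   (Frenkel-Lepowsky-Meurman / Lepowsky-Li definition). *)
Record is_VOA (V : lmodType CC) (Vg : int -> V -> Prop) (Y : vop V V)
    (vac om : V) (c : CC) : Prop := {
  voa_grading : is_Zgrading Vg;
  voa_findim : forall n, fin_dim (Vg n);
  voa_lower : exists N : int, forall n, n < N -> forall v, Vg n v -> v = 0;
  voa_bilinear : vop_bilinear Y;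
  voa_trunc : vop_truncation Y;
  voa_vacuum : forall (m : int) (v : V), Y vac m v = if m == -1 then v else 0;
  voa_creation : forall u : V, Y u (-1) vac = u /\ forall m : int, 0 <= m -> Y u m vac = 0;
  voa_jacobi : jacobi_identity Y Y;
  (* L(n) = omega_{n+1}; Virasoro relations *)
  voa_virasoro : forall (m n : int) (v : V),
      Y om (m + 1) (Y om (n + 1) v) - Y om (n + 1) (Y om (m + 1) v)
      = (m - n)%:~R *: Y om (m + n + 1) v
        + (if m + n == 0 then ((m ^+ 3 - m)%:~R / 12%:R * c) *: v else 0);
  voa_om_wt : Vg 2 om;
  voa_L0 : forall (n : int) (v : V), Vg n v -> Y om 1 v = n%:~R *: v;
  voa_L_1 : forall (u : V) (m : int) (v : V),
      Y (Y om 0 u) m v = - (m%:~R) *: Y u (m - 1) v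
}.

Record is_weak_module (V : lmodType CC) (YV : vop V V) (vac : V)
    (W : lmodType CC) (YW : vop V W) : Prop := {
  wm_bilinear : vop_bilinear YW;
  wm_trunc : vop_truncation YW;
  wm_vacuum : forall (m : int) (w : W), YW vac m w = if m == -1 then w else 0;
  wm_jacobi : jacobi_identity YV YW
}.

(* N-gradable: W = (+)_{n in N} W(n) with v_m W(n) <= W(wt v + n - m - 1)
   for homogeneous v; we index by Z with W(k) = 0 for k < 0. *)
Definition N_gradable (V : lmodType CC) (Vg : int -> V -> Prop)
    (W : lmodType CC) (YW : vop V W) : Prop :=
  exists Wg : int -> W -> Prop,
    is_Zgrading Wg /\
    (forall k : int, k < 0 -> forall w, Wg k w -> w = 0) /\
    (forall (k : int) (v : V) (n m : int) (w : W),
        Vg k v -> Wg n w -> Wg (k + n - m - 1) (YW v m w)).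

Definition Vplus (V : lmodType CC) (Vg : int -> V -> Prop) (v : V) : Prop :=
  exists (s : seq int) (f : int -> V),
    (forall n, n \in s -> 1 <= n) /\ (forall n, Vg n (f n)) /\ v = \sum_(n <- s) f n.

Definition C1 (V : lmodType CC) (Vg : int -> V -> Prop)
    (W : lmodType CC) (YW : vop V W) : W -> Prop :=
  in_span (fun x => exists v w, Vplus Vg v /\ x = YW v (-1) w).

Definition C1_cofinite (V : lmodType CC) (Vg : int -> V -> Prop)
    (W : lmodType CC) (YW : vop V W) : Prop :=
  exists s : seq W, forall w : W,
    exists y z, in_span (fun x => x \in s) y /\ C1 Vg YW z /\ w = y + z.

Definition is_submodule (V : lmodType CC) (W : lmodType CC) (YW : vop V W)
    (P : W -> Prop) : Prop :=
  is_subspace P /\ forall (v : V) (m : int) (w : W), P w -> P (YW v m w).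

Definition finitely_generated (V : lmodType CC) (W : lmodType CC) (YW : vop V W) : Prop :=
  exists S : seq W, forall P : W -> Prop,
    is_submodule YW P -> (forall x, x \in S -> P x) -> forall w, P w.

(* Main.v *)
Require Import Defs.
From mathcomp Require Import all_boot all_order all_algebra.
From mathcomp Require Import complex reals Rstruct.
From mathcomp Require Import zify.
Import GRing.Theory Num.Theory.
Local Open Scope ring_scope.

Section Grad.
Variable W : lmodType CC.
Variable G : int -> W -> Prop.
Hypothesis HG : is_Zgrading G.

Lemma G0 n : G n 0.
Proof. by case: HG => /(_ n) []. Qed.

Lemma GD n x y : G n x -> G n y -> G n (x + y).
Proof. by case: HG => /(_ n) [] _ H _ hx hy; have := H 1 x y hx hy; rewrite scale1r. Qed.

Lemma GZ n a x : G n x -> G n (a *: x).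
Proof. by case: HG => /(_ n) [] H0 H _ hx; have := H a x 0 hx H0; rewrite addr0. Qed.

Lemma sumG n (l : seq (int * W)) :
  (forall p, p \in l -> G p.1 p.2) -> G n (\sum_(p <- l | p.1 == n) p.2).
Proof.
elim: l => [|x l IH] H; first by rewrite big_nil; apply: G0.
rewrite big_cons; have IH' : G n (\sum_(p <- l | p.1 == n) p.2).
  by apply: IH => p pl; apply: H; rewrite inE pl orbT.
case: eqP => // e; apply: GD => //.
by rewrite -e; apply: H; rewrite inE eqxx.
Qed.

Lemma L1 (l : seq (int * W)) :
  (forall p, p \in l -> G p.1 p.2) -> \sum_(p <- l) p.2 = 0 ->
  forall n, \sum_(p <- l | p.1 == n) p.2 = 0.
Proof.
move=> Hl H0 n.
set s := undup (map fst l).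
have key : \sum_(p <- l) p.2 = \sum_(m <- s) \sum_(p <- l | p.1 == m) p.2.
  rewrite [RHS](exchange_big_dep xpredT) //= [LHS]big_seq [RHS]big_seq.
  apply: eq_bigr => p pl.
  rewrite -big_filter.
  have ps : p.1 \in s by rewrite mem_undup; apply/mapP; exists p.
  have -> : [seq m <- s | p.1 == m] = [:: p.1].
    rewrite -(filter_pred1_uniq (undup_uniq _) ps); apply: eq_filter => m /=.
    by rewrite eq_sym.
  by rewrite big_seq1.
case: HG => _ [_ Hu].
case: (boolP (n \in s)) => ns.
  apply: (Hu s (fun m => \sum_(p <- l | p.1 == m) p.2)) => //.
  - exact: undup_uniq.
  - by move=> m; apply: sumG.
  - by rewrite -key.
rewrite big1_seq // => p /andP [/eqP e pl]; case/negP: ns.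
by rewrite -e mem_undup; apply/mapP; exists p.
Qed.

Lemma comp (l : seq (int * W)) n w :
  (forall p, p \in l -> G p.1 p.2) -> G n w -> w = \sum_(p <- l) p.2 ->
  w = \sum_(p <- l | p.1 == n) p.2.
Proof.
move=> Hl Hw e.
set l' := (n, w) :: map (fun p => (p.1, - p.2)) l.
have A : forall p, p \in l' -> G p.1 p.2.
  move=> p; rewrite inE => /orP [/eqP -> //|/mapP [q ql ->] /=].
  by rewrite -scaleN1r; apply: GZ; apply: Hl.
have B : \sum_(p <- l') p.2 = 0 by rewrite big_cons big_map /= sumrN -e subrr.
have := @L1 l' A B n.
rewrite big_cons /= eqxx big_map /= sumrN => /eqP; rewrite subr_eq0 => /eqP //.
Qed.

End Grad.

Section ExpS.
Variable W : lmodType CC.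
Variable G : int -> W -> Prop.
Hypothesis HG : is_Zgrading G.
Variable Q : int -> W -> Prop.
Hypothesis HQ : forall m a t, Q m t -> Q m (a *: t).

Definition Exp (w : W) := exists l : seq (int * W),
  (forall p, p \in l -> G p.1 p.2 /\ Q p.1 p.2) /\ w = \sum_(p <- l) p.2.

Lemma Exp0 : Exp 0.
Proof. by exists [::]; split => //; rewrite big_nil. Qed.

Lemma ExpD x y : Exp x -> Exp y -> Exp (x + y).
Proof.
move=> [l1 [H1 e1]] [l2 [H2 e2]]; exists (l1 ++ l2); split.
  by move=> p; rewrite mem_cat => /orP [] ?; auto.
by rewrite big_cat e1 e2.
Qed.

Lemma ExpZ a x : Exp x -> Exp (a *: x).
Proof.
move=> [l [H e]]; exists (map (fun p => (p.1, a *: p.2)) l); split.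
  move=> p /mapP [q ql ->] /=; have [g h] := H q ql; split.
    exact: GZ.
  exact: HQ.
by rewrite big_map e scaler_sumr.
Qed.

Lemma ExpSum (I : Type) (r : seq I) (Pr : pred I) (F : I -> W) :
  (forall i, Pr i -> Exp (F i)) -> Exp (\sum_(i <- r | Pr i) F i).
Proof. move=> H; apply: big_ind => //; [exact: Exp0 | exact: ExpD]. Qed.

Lemma ExpSingle m t : G m t -> Q m t -> Exp t.
Proof.
move=> g q; exists [:: (m, t)]; split; last by rewrite big_seq1.
by move=> p; rewrite inE => /eqP ->.
Qed.

End ExpS.

Theorem proposition2 (V : lmodType CC) (Vg : int -> V -> Prop) (Y : vop V V)
    (vac om : V) (c : CC) (W : lmodType CC) (YW : vop V W) :
  is_VOA Vg Y vac om c ->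
  is_weak_module Y vac YW ->
  N_gradable Vg YW ->
  C1_cofinite Vg YW ->
  finitely_generated YW.
Proof.
move=> HV HW [Wg [HWg [Hneg Hmod]]] [s Hs].
have [L [LG Ls]] : exists L : seq (int * W), (forall p, p \in L -> Wg p.1 p.2) /\
    forall x, x \in s -> exists l, {subset l <= L} /\ x = \sum_(p <- l) p.2.
  elim: s {Hs} => [|x s [L [LG Ls]]]; first by exists [::].
  have [sx [fx [Hfx ex]]] := HWg.2.1 x.
  exists (map (fun n => (n, fx n)) sx ++ L); split.
    by move=> p; rewrite mem_cat => /orP [/mapP [m _ ->] //|]; exact: LG.
  move=> y; rewrite inE => /orP [/eqP -> | ys].
    exists (map (fun n => (n, fx n)) sx); split; last by rewrite big_map.
    by move=> p pi; rewrite mem_cat pi.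
  have [l [sl el]] := Ls y ys; exists l; split => // p pl.
  by rewrite mem_cat (sl p pl) orbT.
exists (map snd L) => P [[P0 Psub] Pmod] PS.
have PD x y : P x -> P y -> P (x + y).
  by move=> hx hy; have := Psub 1 x y hx hy; rewrite scale1r.
have PZ a x : P x -> P (a *: x).
  by move=> hx; have := Psub a x 0 hx P0; rewrite addr0.
have Psum (I : Type) (r : seq I) (Pr : pred I) F :
    (forall i, Pr i -> P (F i)) -> P (\sum_(i <- r | Pr i) F i).
  by move=> H; apply: big_ind.
have Pcomp n (l : seq (int * W)) : (forall p, p \in l -> p.1 = n -> P p.2) ->
    P (\sum_(p <- l | p.1 == n) p.2).
  move=> H; rewrite big_seq_cond; apply: Psum => p /andP [pl /eqP]; exact: H.
have [YL YR] := wm_bilinear HW.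
have YW0 v m : YW v m 0 = 0.
  by have := YR (-1) v m 0 0; rewrite scaler0 addr0 scaleN1r addNr.
have YWs1 (r : seq int) (F : int -> V) m w :
    YW (\sum_(k <- r) F k) m w = \sum_(k <- r) YW (F k) m w.
  elim: r => [|k r IH].
    rewrite !big_nil.
    by have := YL (-1) 0 0 m w; rewrite scaler0 addr0 scaleN1r addNr.
  by rewrite !big_cons -IH -[F k]scale1r YL !scale1r.
have YWs2 (r : seq int) (F : int -> W) v m :
    YW v m (\sum_(k <- r) F k) = \sum_(k <- r) YW v m (F k).
  elim: r => [|k r IH]; first by rewrite !big_nil.
  by rewrite !big_cons -IH -[F k]scale1r YR !scale1r.
have claim : forall n : nat, forall w, Wg n%:Z w -> P w.
  elim/ltn_ind => n IH w Hw.
  have [y [z [Hy [Hz ew]]]] := Hs w.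
  pose Q := fun (m : int) (t : W) => m = n%:Z -> P t.
  have HQ : forall m a t, Q m t -> Q m (a *: t).
    by move=> m a t H e; apply: PZ; apply: H.
  suff [l [Hl el]] : Exp W Wg Q (y + z).
    rewrite (@comp W Wg HWg l n%:Z w); last by rewrite ew el.
    - by apply: Pcomp => p pl; exact: (Hl p pl).2.
    - by move=> p pl; exact: (Hl p pl).1.
    - exact: Hw.
  apply: ExpD.
  - move: Hy => [k [cc [x [xs ->]]]].
    apply: ExpSum => j _; apply: ExpZ => //.
    have [l [sl el]] := Ls _ (xs j); exists l; split => // p pl; split.
      exact: LG (sl p pl).
    by move=> _; apply: PS; apply/mapP; exists p => //; apply: sl.
  - move: Hz => [k [d [u [Hu ->]]]].
    apply: ExpSum => j _; apply: ExpZ => //.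
    have [v [w' [[sv [fv [sv1 [fvG ev]]]] ->]]] := Hu j.
    have [sw [fw [fwG ew']]] := HWg.2.1 w'.
    rewrite ev ew' YWs1 big_seq; apply: ExpSum => kk ksv.
    rewrite YWs2; apply: ExpSum => p _.
    apply: (@ExpSingle W Wg Q (kk + p)).
      have := Hmod kk (fv kk) p (-1) (fw p) (fvG kk) (fwG p).
      by rewrite opprK addrK.
    move=> e; have k1 := sv1 kk ksv.
    move: e (fwG p); case: p => q e Hq.
      have qn : (q < n)%N by lia.
      by apply: Pmod; apply: (IH q qn).
    by rewrite (Hneg _ _ _ Hq) // YW0.
move=> w; have [sw [fw [fwG ->]]] := HWg.2.1 w.
apply: Psum => m _; case: m fwG => q fwG.
  exact: claim.
by rewrite (Hneg _ _ _ (fwG _)).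
Qed.
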